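(* Let $\gamma_1,\gamma_2\in\mathbb{C}$ with $\mathrm{Re}(\gamma_i)>0$, let $H^i(s)=\gamma_i/(s+\gamma_i)$ with impulse responses $h^i_t=\gamma_ie^{-\gamma_it}$ ($t\ge0$), and let $H=H^1H^2$ with impulse response $h=h^1*h^2$. Let $g\colon\mathbb{R}_+\to\mathbb{C}$ be twice continuously differentiable and bounded, with $\|g\|_\infty=\sup_t|g_t|$, and set $\hat g^{(m)}_t=\int_0^th_{t-\tau}g^{(m)}_\tau\,d\tau$, where $g^{(m)}$ is the $m$-th derivative. Then, as $t\to\infty$, $$|\hat g^{(1)}_t|\le|\gamma_1|\big(\|h^2\|_1+\|h\|_1\big)\|g\|_\infty+o(1),\qquad |\hat g^{(2)}_t|\le|\gamma_1\gamma_2|\big(1+\|h^1\|_1+\|h^2\|_1+\|h\|_1\big)\|g\|_\infty+o(1),$$ where $\|\cdot\|_1$ is the $L_1(\mathbb{R}_+)$ norm and $o(1)$ denotes a term (depending on $g$) that vanishes as $t\to\infty$. In the special case $H(s)=\gamma^2/(s^2+2\zeta\gamma s+\gamma^2)$ with $\gamma>0$ and $0<\zeta\le1$ (i.e. $-\gamma_1,-\gamma_2$ the roots of $s^2+2\zeta\gamma s+\gamma^2$), $$\|h^2\|_1=\|h^1\|_1\le\frac1\zeta,\qquad \|h\|_1\le\frac1{\zeta^2}.$$ *)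

(* Defs.v *)
From Stdlib Require Import Reals.
From Coquelicot Require Import Coquelicot.
Open Scope R_scope.

Definition Cexp (z : C) : C :=
  (exp (fst z) * cos (snd z), exp (fst z) * sin (snd z)).

(* impulse response of gam/(s+gam):  t |-> gam e^{-gam t} (used for t >= 0) *)
Definition impulse1 (gam : C) (t : R) : C :=
  Cmult gam (Cexp (Cmult (RtoC (- t)) gam)).

Definition conv (f1 f2 : R -> C) (t : R) : C :=
  @RInt C_R_CompleteNormedModule (fun tau => Cmult (f1 (t - tau)) (f2 tau)) 0 t.

Definition L1norm (f : R -> C) : R :=
  RInt_gen (fun t => Cmod (f t)) (at_point 0) (Rbar_locally p_infty).

Definition supnorm (f : R -> C) : R :=
  real (Lub_Rbar (fun r => exists t, 0 <= t /\ r = Cmod (f t))).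

(* hat g^{(m)}_t = int_0^t h_{t-tau} g^{(m)}_tau dtau, with gm = g^{(m)} *)
Definition filt (h gm : R -> C) (t : R) : C :=
  @RInt C_R_CompleteNormedModule (fun tau => Cmult (h (t - tau)) (gm tau)) 0 t.

Definition cont_Rplus (f : R -> C) (t : R) : Prop :=
  filterlim f (within (fun x => 0 <= x) (locally t)) (locally (f t)).

(* Main.v *)
Require Import Defs.
From Stdlib Require Import Reals Lra Lia Psatz.
From Coquelicot Require Import Coquelicot.
Open Scope R_scope.

Lemma normC (z : C) : @norm R_AbsRing C_R_NormedModule z = Cmod z.
Proof.
  unfold Cmod. change (sqrt (norm (fst z) ^ 2 + norm (snd z) ^ 2) = sqrt (fst z ^ 2 + snd z ^ 2)).
  unfold norm; simpl. unfold abs; simpl. f_equal. rewrite !Rmult_1_r. pose proof (Rsqr_abs (fst z)); pose proof (Rsqr_abs (snd z)); unfold Rsqr in *; lra.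
Qed.

Lemma deriv_fst (f : R -> C) x (l : C) :
  is_derive f x l -> is_derive (fun t => fst (f t)) x (fst l).
Proof.
  intros H. unfold is_derive in *.
  exact (filterdiff_comp f (fun p : C_R_NormedModule => fst p) _ (fun p : C_R_NormedModule => fst p) H
    (filterdiff_linear _ is_linear_fst)).
Qed.

Lemma deriv_snd (f : R -> C) x (l : C) :
  is_derive f x l -> is_derive (fun t => snd (f t)) x (snd l).
Proof.
  intros H. unfold is_derive in *.
  exact (filterdiff_comp f (fun p : C_R_NormedModule => snd p) _ (fun p : C_R_NormedModule => snd p) H
    (filterdiff_linear _ is_linear_snd)).
Qed.

Lemma deriv_pair (u v : R -> R) x a b :
  is_derive u x a -> is_derive v x b ->
  @is_derive R_AbsRing C_R_NormedModule (fun t => (u t, v t)) x (a, b).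
Proof.
  intros Hu Hv. unfold is_derive in *.
  apply (filterdiff_comp'_2 u v (fun p q => (p, q) : C_R_NormedModule) x _ _ (fun p q => (p, q)) Hu Hv).
  apply filterdiff_linear.
  apply (is_linear_prod (fun t : prod_NormedModule R_AbsRing R_NormedModule R_NormedModule => fst t)
     (fun t : prod_NormedModule R_AbsRing R_NormedModule R_NormedModule => snd t)).
  apply is_linear_fst. apply is_linear_snd.
Qed.

Lemma deriv_C (f : R -> C) x (l : C) :
  is_derive (fun t => fst (f t)) x (fst l) -> is_derive (fun t => snd (f t)) x (snd l) ->
  is_derive f x l.
Proof.
  intros H1 H2. destruct l as [a b].
  eapply is_derive_ext; [| exact (deriv_pair _ _ x a b H1 H2)].
  intros t; simpl. destruct (f t); reflexivity.
Qed.

Lemma is_derive_eq {V : NormedModule R_AbsRing} (f : R -> V) x (l l' : V) :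
  is_derive f x l -> l = l' -> is_derive f x l'.
Proof. intros H <-; exact H. Qed.

Lemma mulC (n m : R_AbsRing) : mult n m = mult m n.
Proof. apply Rmult_comm. Qed.

Lemma deriv_Cmult (f g : R -> C) x (a b : C) :
  is_derive f x a -> is_derive g x b ->
  is_derive (fun t => Cmult (f t) (g t)) x (Cplus (Cmult a (g x)) (Cmult (f x) b)).
Proof.
  intros Hf Hg. apply deriv_C.
  - refine (is_derive_eq _ _ _ _ (is_derive_minus _ _ x _ _
      (is_derive_mult _ _ x _ _ (deriv_fst _ _ _ Hf) (deriv_fst _ _ _ Hg) mulC)
      (is_derive_mult _ _ x _ _ (deriv_snd _ _ _ Hf) (deriv_snd _ _ _ Hg) mulC)) _).
    unfold Cmult, Cplus, minus, plus, mult, opp; simpl. ring.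
  - refine (is_derive_eq _ _ _ _ (is_derive_plus _ _ x _ _
      (is_derive_mult _ _ x _ _ (deriv_fst _ _ _ Hf) (deriv_snd _ _ _ Hg) mulC)
      (is_derive_mult _ _ x _ _ (deriv_snd _ _ _ Hf) (deriv_fst _ _ _ Hg) mulC)) _).
    unfold Cmult, Cplus, minus, plus, mult, opp; simpl. ring.
Qed.

Lemma deriv_Cexp_lin (z : C) (c d s : R) :
  is_derive (fun s => Cexp (Cmult (RtoC (c * s + d)) z)) s
    (Cmult (Cmult (RtoC c) z) (Cexp (Cmult (RtoC (c * s + d)) z))).
Proof.
  destruct z as [x y]. apply deriv_C; unfold Cexp, Cmult, RtoC; simpl;
  auto_derive; auto; unfold Rminus; ring.
Qed.

Lemma is_RInt_eq {V : NormedModule R_AbsRing} (f : R -> V) a b (l l' : V) :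
  is_RInt f a b l -> l = l' -> is_RInt f a b l'.
Proof. intros H <-; exact H. Qed.

Lemma RInt_fstC (f : R -> C) a b (l : C) :
  is_RInt f a b l -> is_RInt (fun t => fst (f t)) a b (fst l).
Proof. intros H. exact (is_RInt_fct_extend_fst (U := R_NormedModule) (V := R_NormedModule) f a b l H). Qed.

Lemma RInt_sndC (f : R -> C) a b (l : C) :
  is_RInt f a b l -> is_RInt (fun t => snd (f t)) a b (snd l).
Proof. intros H. exact (is_RInt_fct_extend_snd (U := R_NormedModule) (V := R_NormedModule) f a b l H). Qed.

Lemma RInt_pairC (f : R -> C) a b (l : C) :
  is_RInt (fun t => fst (f t)) a b (fst l) -> is_RInt (fun t => snd (f t)) a b (snd l) ->
  is_RInt f a b l.
Proof.
  intros H1 H2. destruct l as [l1 l2].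
  pose proof (is_RInt_fct_extend_pair (U := R_NormedModule) (V := R_NormedModule) f a b l1 l2 H1 H2) as H.
  exact H.
Qed.

Lemma is_RInt_Cmult_l (c : C) (f : R -> C) a b (l : C) :
  is_RInt f a b l -> is_RInt (fun t => Cmult c (f t)) a b (Cmult c l).
Proof.
  intros H. destruct c as [c1 c2]. apply RInt_pairC.
  - refine (is_RInt_eq _ _ _ _ _ (is_RInt_minus _ _ a b _ _
       (is_RInt_scal _ a b c1 _ (RInt_fstC _ _ _ _ H)) (is_RInt_scal _ a b c2 _ (RInt_sndC _ _ _ _ H))) _).
    reflexivity.
  - refine (is_RInt_eq _ _ _ _ _ (is_RInt_plus _ _ a b _ _
       (is_RInt_scal _ a b c1 _ (RInt_sndC _ _ _ _ H)) (is_RInt_scal _ a b c2 _ (RInt_fstC _ _ _ _ H))) _).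
    reflexivity.
Qed.

Lemma cont_Cmod (f : R -> C) x : continuous f x -> continuous (fun t => Cmod (f t)) x.
Proof.
  intros H. apply continuous_ext with (f := fun t => @norm R_AbsRing C_R_NormedModule (f t)).
  { intros t. apply normC. }
  apply continuous_comp with (f := f) (g := @norm R_AbsRing C_R_NormedModule); [exact H|].
  exact (filterlim_norm (K:=R_AbsRing) (V:=C_R_NormedModule) (f x)).
Qed.

Lemma Cmod_RInt_le (f : R -> C) (g : R -> R) a b (lf : C) (lg : R) :
  a <= b -> (forall x, a <= x <= b -> Cmod (f x) <= g x) ->
  is_RInt f a b lf -> is_RInt g a b lg -> Cmod lf <= lg.
Proof.
  intros Hab Hb H1 H2. rewrite <- normC.
  apply (norm_RInt_le f g a b lf lg Hab); auto.
  intros x Hx. rewrite normC. auto.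
Qed.

Lemma Cexp_add (z w : C) : Cexp (Cplus z w) = Cmult (Cexp z) (Cexp w).
Proof.
  destruct z as [a b], w as [c d]. unfold Cexp, Cplus, Cmult; simpl.
  rewrite exp_plus, cos_plus, sin_plus. apply injective_projections; simpl; ring.
Qed.

Lemma Cexp_0 : Cexp (0, 0) = (1, 0).
Proof. unfold Cexp; simpl. rewrite exp_0, cos_0, sin_0. apply injective_projections; simpl; ring. Qed.

Lemma Cmod_Cexp (z : C) : Cmod (Cexp z) = exp (fst z).
Proof.
  destruct z as [a b]. unfold Cmod, Cexp; cbn [fst snd].
  replace ((exp a * cos b) ^ 2 + (exp a * sin b) ^ 2) with (exp a ^ 2).
  - rewrite sqrt_pow2; auto. left; apply exp_pos.
  - pose proof (sin2_cos2 b). unfold Rsqr in *. nra.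
Qed.

Lemma Cmod_imp (g : C) (s : R) : Cmod (impulse1 g s) = Cmod g * exp (- s * fst g).
Proof.
  unfold impulse1. rewrite Cmod_mult, Cmod_Cexp. destruct g as [x y]; simpl. f_equal. f_equal. ring.
Qed.

Lemma imp_deriv (g : C) (s : R) :
  is_derive (impulse1 g) s (Cmult (Copp g) (impulse1 g s)).
Proof.
  unfold impulse1.
  eapply is_derive_ext.
  { intros t. instantiate (1 := fun t => Cmult g (Cexp (Cmult (RtoC (-1 * t + 0)) g))). simpl.
    replace (-1 * t + 0) with (- t) by ring. reflexivity. }
  eapply is_derive_eq.
  { apply deriv_Cmult. apply is_derive_const. apply deriv_Cexp_lin. }
  assert (E : -1 * s + 0 = - s) by ring.
  destruct g as [x y]. unfold Cexp, Cplus, Cmult, Copp, RtoC; simpl.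
  rewrite E. change (@zero R_NormedModule) with 0.
  apply injective_projections; simpl; unfold zero; simpl; ring.
Qed.

Lemma imp_cont (g : C) (s : R) : continuous (impulse1 g) s.
Proof. exact (ex_derive_continuous (K:=R_AbsRing) (V:=C_R_NormedModule) (impulse1 g) s (ex_intro _ _ (imp_deriv g s))). Qed.

Lemma derC_cont (f : R -> C) s (l : C) : is_derive f s l -> continuous f s.
Proof. intros H. exact (ex_derive_continuous (K:=R_AbsRing) (V:=C_R_NormedModule) f s (ex_intro _ _ H)). Qed.

Lemma exRC (f : R -> C) a b : (forall x, continuous f x) -> ex_RInt (V := C_R_CompleteNormedModule) f a b.
Proof. intros H. apply ex_RInt_continuous. intros z _. apply H. Qed.

Lemma cont_fstC (f : R -> C) x : continuous f x -> continuous (fun t => fst (f t)) x.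
Proof.
  intros H. apply continuous_comp with (f := f) (g := @fst R R); auto.
  destruct (f x) as [a b]. apply (continuous_fst (U:=R_UniformSpace) (V:=R_UniformSpace)).
Qed.

Lemma cont_sndC (f : R -> C) x : continuous f x -> continuous (fun t => snd (f t)) x.
Proof.
  intros H. apply continuous_comp with (f := f) (g := @snd R R); auto.
  destruct (f x) as [a b]. apply (continuous_snd (U:=R_UniformSpace) (V:=R_UniformSpace)).
Qed.

Lemma cont_pairC (u v : R -> R) x : continuous u x -> continuous v x ->
  @continuous R_UniformSpace C_UniformSpace (fun t => (u t, v t)) x.
Proof.
  intros Hu Hv.
  apply (continuous_comp_2 (X := C_UniformSpace) u v (fun a b => (a, b)) x Hu Hv).
  apply continuous_ext with (f := fun p : R * R => p).
  { intros [a b]; reflexivity. }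
  apply (continuous_id (U := C_UniformSpace)).
Qed.

Lemma cont_C (f : R -> C) x : continuous (fun t => fst (f t)) x -> continuous (fun t => snd (f t)) x ->
  continuous f x.
Proof.
  intros H1 H2. apply continuous_ext with (f := fun t => (fst (f t), snd (f t))).
  { intros t; destruct (f t); reflexivity. }
  apply cont_pairC; auto.
Qed.

Lemma cont_Cmult (f g : R -> C) x : continuous f x -> continuous g x ->
  continuous (fun t => Cmult (f t) (g t)) x.
Proof.
  intros Hf Hg. apply cont_C.
  - exact (continuous_minus (K:=R_AbsRing) (V:=R_NormedModule) _ _ x
       (continuous_mult (K:=R_AbsRing) _ _ x (cont_fstC _ _ Hf) (cont_fstC _ _ Hg))
       (continuous_mult (K:=R_AbsRing) _ _ x (cont_sndC _ _ Hf) (cont_sndC _ _ Hg))).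
  - exact (continuous_plus (K:=R_AbsRing) (V:=R_NormedModule) _ _ x
       (continuous_mult (K:=R_AbsRing) _ _ x (cont_fstC _ _ Hf) (cont_sndC _ _ Hg))
       (continuous_mult (K:=R_AbsRing) _ _ x (cont_sndC _ _ Hf) (cont_fstC _ _ Hg))).
Qed.

Lemma cont_shift (f : R -> C) s x : (forall y, continuous f y) -> continuous (fun t => f (s - t)) x.
Proof.
  intros H. apply continuous_comp with (f := fun t => s - t) (g := f); auto.
  apply (continuous_minus (K:=R_AbsRing) (V:=R_NormedModule)). apply continuous_const. apply continuous_id.
Qed.

Lemma RIntC_unique (f : R -> C) a b (l : C) :
  is_RInt f a b l -> @RInt C_R_CompleteNormedModule f a b = l.
Proof. intros H. exact (is_RInt_unique (V:=C_R_CompleteNormedModule) f a b l H). Qed.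

Lemma RIntC_correct (f : R -> C) a b :
  (forall x, continuous f x) -> is_RInt f a b (@RInt C_R_CompleteNormedModule f a b).
Proof. intros H. exact (RInt_correct (V:=C_R_CompleteNormedModule) f a b (exRC f a b H)). Qed.

Lemma RInt_reflect {V : NormedModule R_AbsRing} (f : R -> V) s (I : V) :
  is_RInt f 0 s I -> is_RInt (fun y => f (s - y)) 0 s I.
Proof.
  intros H. apply is_RInt_swap in H.
  assert (H2 : is_RInt f (-1 * 0 + s) (-1 * s + s) (opp I)).
  { replace (-1 * 0 + s) with s by ring. replace (-1 * s + s) with 0 by ring. exact H. }
  apply is_RInt_comp_lin in H2. apply is_RInt_opp in H2. rewrite opp_opp in H2.
  eapply is_RInt_ext; [| exact H2].
  intros x _. simpl. replace (-1 * x + s) with (s - x) by ring.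
  assert (E : scal (-1) (f (s - x)) = opp (f (s - x))).
  { transitivity (scal (K := AbsRing.Ring R_AbsRing) (opp one) (f (s - x))). f_equal.
    exact (scal_opp_one (K:=AbsRing.Ring R_AbsRing) (V:=NormedModule.ModuleSpace R_AbsRing V) _). }
  rewrite E. exact (opp_opp (G:=NormedModule.AbelianGroup R_AbsRing V) _).
Qed.

Lemma Cexp_lin_deriv (z : C) t :
  is_derive (fun t => Cexp (Cmult (RtoC t) z)) t (Cmult z (Cexp (Cmult (RtoC t) z))).
Proof.
  eapply is_derive_ext.
  { intros u. instantiate (1 := fun u => Cexp (Cmult (RtoC (1 * u + 0)) z)). simpl.
    rewrite Rmult_1_l, Rplus_0_r. reflexivity. }
  eapply is_derive_eq. apply deriv_Cexp_lin.
  rewrite Rmult_1_l, Rplus_0_r.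
  destruct z as [x y]; apply injective_projections; simpl; ring.
Qed.

Definition kern (ga gb : C) (t : R) : C := Cmult (Cexp (Cmult (RtoC t) ga)) (impulse1 gb t).

Lemma kern_deriv ga gb t : is_derive (kern ga gb) t
   (Cplus (Cmult (Cmult ga (Cexp (Cmult (RtoC t) ga))) (impulse1 gb t))
          (Cmult (Cexp (Cmult (RtoC t) ga)) (Cmult (Copp gb) (impulse1 gb t)))).
Proof. unfold kern. apply deriv_Cmult. apply Cexp_lin_deriv. apply imp_deriv. Qed.

Lemma kern_cont ga gb t : continuous (kern ga gb) t.
Proof. eapply derC_cont. apply kern_deriv. Qed.

Lemma conv_factor (ga gb : C) s :
  conv (impulse1 ga) (impulse1 gb) s = Cmult (impulse1 ga s) (@RInt C_R_CompleteNormedModule (kern ga gb) 0 s).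
Proof.
  unfold conv. apply RIntC_unique.
  pose proof (RIntC_correct (kern ga gb) 0 s (kern_cont ga gb)) as H.
  apply (is_RInt_Cmult_l (impulse1 ga s)) in H.
  eapply is_RInt_ext; [| exact H].
  intros x _. unfold kern, impulse1.
  replace (Cmult (RtoC (- (s - x))) ga) with (Cplus (Cmult (RtoC (- s)) ga) (Cmult (RtoC x) ga)).
  2:{ destruct ga as [p q]; apply injective_projections; simpl; ring. }
  rewrite Cexp_add.
  set (A := Cexp (Cmult (RtoC (- s)) ga)). set (B := Cexp (Cmult (RtoC x) ga)).
  set (D := Cexp (Cmult (RtoC (- x)) gb)).
  destruct A as [a1 a2], B as [b1 b2], D as [d1 d2], ga as [p q], gb as [u v].
  apply injective_projections; simpl; ring.
Qed.

Lemma conv_comm (f g : R -> C) s :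
  (forall x, continuous f x) -> (forall x, continuous g x) -> conv f g s = conv g f s.
Proof.
  intros Hf Hg. unfold conv.
  assert (Hc : forall x, continuous (fun t => Cmult (f (s - t)) (g t)) x).
  { intros x. apply cont_Cmult; [apply cont_shift; auto | auto]. }
  pose proof (RIntC_correct _ 0 s Hc) as H.
  apply RInt_reflect in H. symmetry. apply RIntC_unique.
  eapply is_RInt_ext; [| exact H].
  intros x _. simpl. replace (s - (s - x)) with x by ring. apply Cmult_comm.
Qed.

Ltac ceq := apply injective_projections; simpl; ring.

Lemma imp_kern ga gb s : Cmult (impulse1 ga s) (kern ga gb s) = Cmult ga (impulse1 gb s).
Proof.
  unfold kern. unfold impulse1 at 1.
  set (A := Cexp (Cmult (RtoC (- s)) ga)). set (B := Cexp (Cmult (RtoC s) ga)).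
  set (ib := impulse1 gb s).
  assert (E : Cmult A B = (1, 0)).
  { unfold A, B. rewrite <- Cexp_add. rewrite <- Cexp_0. f_equal.
    destruct ga as [p q]; ceq. }
  transitivity (Cmult (Cmult ga (Cmult A B)) ib).
  { clearbody A B ib. destruct A, B, ib, ga. ceq. }
  rewrite E. clearbody ib. destruct ib, ga. ceq.
Qed.

Lemma conv_deriv ga gb s :
  is_derive (conv (impulse1 ga) (impulse1 gb)) s
    (Cmult ga (Cminus (impulse1 gb s) (conv (impulse1 ga) (impulse1 gb) s))).
Proof.
  eapply is_derive_ext.
  { intros t. symmetry. apply conv_factor. }
  eapply is_derive_eq.
  { apply deriv_Cmult. apply imp_deriv.
    apply (is_derive_RInt (V:=C_R_NormedModule) (kern ga gb)
      (fun b => @RInt C_R_CompleteNormedModule (kern ga gb) 0 b) 0 s).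
    - apply filter_forall. intros b. apply RIntC_correct. apply kern_cont.
    - apply kern_cont. }
  rewrite conv_factor.
  rewrite (Cplus_comm _ _) at 1. 
  change (Cmult (impulse1 ga s) (kern ga gb s)) with (Cmult (impulse1 ga s) (kern ga gb s)).
  rewrite imp_kern.
  set (F := @RInt C_R_CompleteNormedModule (kern ga gb) 0 s). clearbody F.
  set (i1 := impulse1 ga s). set (i2 := impulse1 gb s). clearbody i1 i2.
  destruct F, i1, i2, ga. unfold Cminus, Cplus, Copp, Cmult. ceq.
Qed.

Lemma FTC_right (f df : R -> C) a b : a <= b ->
  (forall x, a < x <= b -> is_derive f x (df x)) -> (forall x, continuous df x) ->
  continuous f a -> is_RInt df a b (@minus C_R_NormedModule (f b) (f a)).
Proof.
  intros Hab Hd Hc Hfa. destruct Hab as [Hab | <-].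
  2:{ rewrite minus_eq_zero. apply is_RInt_point. }
  set (J := fun x => @RInt C_R_CompleteNormedModule df b x).
  assert (HJ : forall x, is_RInt df b x (J x)) by (intros x; apply RIntC_correct; auto).
  assert (HJc : continuous J a).
  { eapply derC_cont. apply (is_derive_RInt (V:=C_R_NormedModule) df J b a).
    apply filter_forall. intros; apply HJ. apply Hc. }
  assert (Heq : forall x, a < x <= b -> f x = @plus C_R_NormedModule (J x) (f b)).
  { intros x Hx.
    assert (H1 : is_RInt df x b (@minus C_R_NormedModule (f b) (f x))).
    { apply (is_RInt_derive (V:=C_R_CompleteNormedModule)).
      - intros y Hy. apply Hd. rewrite Rmin_left, Rmax_right in Hy; lra.
      - intros y _. apply Hc. }
    apply is_RInt_swap in H1.
    assert (E : J x = @opp C_R_NormedModule (@minus C_R_NormedModule (f b) (f x))).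
    { apply RIntC_unique. exact H1. }
    rewrite E. destruct (f b), (f x). apply injective_projections; simpl; unfold plus, opp, minus; simpl; ring. }
  assert (L1 : filterlim f (at_right a) (locally (f a))).
  { apply (filterlim_filter_le_1 (F := locally a)). apply filter_le_within. exact Hfa. }
  assert (L2 : filterlim f (at_right a) (locally (@plus C_R_NormedModule (J a) (f b)))).
  { apply filterlim_ext_loc with (f := fun x => @plus C_R_NormedModule (J x) (f b)).
    - assert (Hp : 0 < b - a) by lra. exists (mkposreal _ Hp). intros y Hy Hay.
      symmetry. apply Heq. split; auto. 
      unfold ball in Hy; simpl in Hy; unfold AbsRing_ball, abs, minus, plus, opp in Hy; simpl in Hy.
      apply Rabs_lt_between in Hy. lra.
    - apply (filterlim_filter_le_1 (F := locally a)). apply filter_le_within.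
      apply (continuous_plus (K:=R_AbsRing) (V:=C_R_NormedModule) J (fun _ => f b) a HJc).
      apply continuous_const. }
  assert (E : f a = @plus C_R_NormedModule (J a) (f b)).
  { apply (filterlim_locally_unique (K:=R_AbsRing) (V:=C_R_NormedModule) f _ _ L1 L2). }
  pose proof (is_RInt_swap _ _ _ _ (HJ a)) as HJa.
  eapply is_RInt_eq. apply HJa. rewrite E.
  destruct (J a), (f b). apply injective_projections; simpl; unfold plus, opp, minus; simpl; ring.
Qed.

Lemma alg_pm (a b c d I : C) :
  @plus C_R_NormedModule (@minus C_R_NormedModule (Cmult a b) (Cmult c d)) I
  = Cplus (Cminus (Cmult a b) (Cmult c d)) I.
Proof. destruct a, b, c, d, I. apply injective_projections; simpl; unfold plus, minus, opp; simpl; ring. Qed.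

Lemma ibp (K Kd G Gd : R -> C) t : 0 <= t ->
  (forall s, is_derive K s (Kd s)) -> (forall s, continuous Kd s) ->
  (forall s, continuous G s) -> (forall s, continuous Gd s) ->
  (forall s, 0 < s -> is_derive G s (Gd s)) ->
  is_RInt (fun u => Cmult (K (t - u)) (Gd u)) 0 t
    (Cplus (Cminus (Cmult (K 0) (G t)) (Cmult (K t) (G 0)))
           (@RInt C_R_CompleteNormedModule (fun u => Cmult (Kd (t - u)) (G u)) 0 t)).
Proof.
  intros Ht HK HKc HG HGd HGder.
  assert (HKc0 : forall s, continuous K s) by (intros s; eapply derC_cont; apply HK).
  set (phi := fun u => Cmult (K (t - u)) (G u)).
  set (dphi := fun u => Cplus (Cmult (Copp (Kd (t - u))) (G u)) (Cmult (K (t - u)) (Gd u))).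
  assert (H1 : is_RInt dphi 0 t (@minus C_R_NormedModule (phi t) (phi 0))).
  { apply FTC_right; auto.
    - intros x Hx. unfold phi, dphi.
      eapply is_derive_eq.
      { apply deriv_Cmult; [| apply HGder; lra].
        apply (is_derive_comp (V:=C_R_NormedModule) K (fun u => t - u) x).
        apply HK.
        apply (is_derive_minus (K:=R_AbsRing) (V:=R_NormedModule) (fun _ => t) (fun u => u) x).
        apply is_derive_const. apply is_derive_id. }
      destruct (Kd (t - x)), (G x), (K (t - x)), (Gd x).
      apply injective_projections; simpl; unfold scal, minus, plus, opp, zero, one; simpl;
        unfold mult; simpl; ring.
    - intros x. unfold dphi. apply (continuous_plus (K:=R_AbsRing) (V:=C_R_NormedModule)).
      + apply cont_Cmult; auto.
        apply (continuous_opp (K:=R_AbsRing) (V:=C_R_NormedModule) (fun u => Kd (t - u))).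
        apply cont_shift; auto.
      + apply cont_Cmult; auto. apply cont_shift; auto.
    - unfold phi. apply cont_Cmult; auto. apply cont_shift; auto. }
  assert (Hc2 : forall x, continuous (fun u => Cmult (Kd (t - u)) (G u)) x).
  { intros x; apply cont_Cmult; auto; apply cont_shift; auto. }
  pose proof (RIntC_correct _ 0 t Hc2) as H2.
  pose proof (is_RInt_plus _ _ _ _ _ _ H1 H2) as H3.
  eapply is_RInt_ext in H3.
  2:{ intros x _. unfold dphi. instantiate (1 := fun u => Cmult (K (t - u)) (Gd u)). simpl.
      destruct (Kd (t - x)), (G x), (K (t - x)), (Gd x).
      apply injective_projections; simpl; unfold plus; simpl; ring. }
  eapply is_RInt_eq. apply H3.
  unfold phi. replace (t - t) with 0 by ring. replace (t - 0) with t by ring.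
  apply alg_pm.
Qed.

Lemma supnorm_bound (g : R -> C) M : (forall t, 0 <= t -> Cmod (g t) <= M) ->
  forall t, 0 <= t -> Cmod (g t) <= supnorm g.
Proof.
  intros HM t Ht. unfold supnorm.
  set (E := fun r => exists t, 0 <= t /\ r = Cmod (g t)).
  destruct (Lub_Rbar_correct E) as [Hub Hlub].
  destruct (Lub_Rbar E) as [r | |] eqn:Hl.
  - simpl. specialize (Hub (Cmod (g t))). simpl in Hub. apply Hub. exists t; auto.
  - exfalso. specialize (Hlub (Finite M)). simpl in Hlub. apply Hlub.
    intros x [u [Hu ->]]. simpl. auto.
  - exfalso. specialize (Hub (Cmod (g t))). simpl in Hub. apply Hub. exists t; auto.
Qed.

Lemma supnorm_ge0 (g : R -> C) M : (forall t, 0 <= t -> Cmod (g t) <= M) -> 0 <= supnorm g.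
Proof.
  intros HM. apply Rle_trans with (Cmod (g 0)). apply Cmod_ge_0.
  apply (supnorm_bound g M HM). lra.
Qed.

Lemma exRR (f : R -> R) a b : (forall x, continuous f x) -> ex_RInt f a b.
Proof. intros H. apply (ex_RInt_continuous (V:=R_CompleteNormedModule)). intros z _. apply H. Qed.

Lemma RInt_mono (f : R -> R) T b : (forall x, continuous f x) -> (forall x, 0 <= x -> 0 <= f x) ->
  0 <= T <= b -> RInt f 0 T <= RInt f 0 b.
Proof.
  intros Hc Hp Hb.
  rewrite <- (RInt_Chasles (V:=R_CompleteNormedModule) f 0 T b (exRR f 0 T Hc) (exRR f T b Hc)).
  assert (0 <= RInt f T b).
  { apply RInt_ge_0. lra. apply exRR; auto. intros x Hx. apply Hp. lra. }
  change (RInt f 0 T <= RInt f 0 T + RInt f T b). lra.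
Qed.

Lemma improper_ge (f : R -> R) L : (forall x, continuous f x) -> (forall x, 0 <= x -> 0 <= f x) ->
  is_RInt_gen f (at_point 0) (Rbar_locally p_infty) L -> forall T, 0 <= T -> RInt f 0 T <= L.
Proof.
  intros Hc Hp H T HT.
  destruct (Rle_or_lt (RInt f 0 T) L) as [Hle | Hlt]; auto. exfalso.
  assert (He : 0 < RInt f 0 T - L) by lra.
  specialize (H (ball L (mkposreal _ He))).
  assert (Hl : locally L (ball L (mkposreal _ He))) by (exists (mkposreal _ He); auto).
  specialize (H Hl). destruct H as [Q R0 HQ HR Himp].
  destruct HR as [M HM].
  set (b := Rmax (M + 1) T).
  assert (Hb : M < b) by (unfold b; pose proof (Rmax_l (M+1) T); lra).
  destruct (Himp 0 b HQ (HM b Hb)) as [y [Hy Hball]]. simpl in Hy.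
  assert (Ey : y = RInt f 0 b).
  { symmetry. apply (is_RInt_unique (V:=R_CompleteNormedModule)). exact Hy. }
  assert (Hm : RInt f 0 T <= RInt f 0 b).
  { apply RInt_mono; auto. split; auto. unfold b; apply Rmax_r. }
  unfold ball in Hball; simpl in Hball; unfold AbsRing_ball, abs, minus, plus, opp in Hball; simpl in Hball.
  apply Rabs_lt_between in Hball. lra.
Qed.

Lemma improper_exists (f : R -> R) B : (forall x, continuous f x) -> (forall x, 0 <= x -> 0 <= f x) ->
  (forall T, 0 <= T -> RInt f 0 T <= B) ->
  exists L, is_RInt_gen f (at_point 0) (Rbar_locally p_infty) L /\ L <= B.
Proof.
  intros Hc Hp HB.
  set (E := fun r => exists T, 0 <= T /\ r = RInt f 0 T).
  destruct (completeness E) as [L [HLub HLl]].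
  { exists B. intros r [T [HT ->]]. auto. }
  { exists (RInt f 0 0). exists 0; split; auto; lra. }
  exists L. split.
  2:{ apply HLl. intros r [T [HT ->]]. auto. }
  intros P [eps HP].
  assert (HT0 : exists T0, 0 <= T0 /\ L - eps < RInt f 0 T0).
  { apply Classical_Prop.NNPP. intros Hn.
    assert (L <= L - eps).
    { apply HLl. intros r [T [HT ->]].
      destruct (Rle_or_lt (RInt f 0 T) (L - eps)) as [h|h]; auto.
      exfalso; apply Hn; exists T; auto. }
    destruct eps; simpl in *; lra. }
  destruct HT0 as [T0 [HT0 HT0']].
  apply Filter_prod with (Q := fun a => a = 0) (R := fun b => T0 < b).
  - reflexivity.
  - exists T0; auto.
  - intros a b -> Hb. exists (RInt f 0 b). split.
    + apply (RInt_correct (V:=R_CompleteNormedModule)). apply exRR; auto.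
    + apply HP. 
      assert (H1 : RInt f 0 T0 <= RInt f 0 b) by (apply RInt_mono; auto; lra).
      assert (H2 : RInt f 0 b <= L) by (apply HLub; exists b; split; auto; lra).
      unfold ball; simpl; unfold AbsRing_ball, abs, minus, plus, opp; simpl.
      apply Rabs_lt_between. destruct eps; simpl in *; lra.
Qed.

Lemma exp_decay1 a t : 0 < a -> 0 < t -> exp (- t * a) <= / (a * t).
Proof.
  intros Ha Ht. pose proof (exp_ineq1_le (t * a)) as H1.
  assert (Hp : 0 < exp (t * a)) by apply exp_pos.
  replace (- t * a) with (- (t * a)) by ring. rewrite exp_Ropp.
  apply Rinv_le_contravar. nra. nra.
Qed.

Lemma exp_decay2 a t : 0 < a -> 0 < t -> t * exp (- t * a) <= 4 / (a ^ 2 * t).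
Proof.
  intros Ha Ht. pose proof (exp_ineq1_le (t * a / 2)) as H1.
  assert (E : exp (t * a) = exp (t * a / 2) * exp (t * a / 2)).
  { rewrite <- exp_plus. f_equal. field. }
  assert (Hp : 0 < exp (t * a / 2)) by apply exp_pos.
  assert (H2 : (t * a) ^ 2 / 4 <= exp (t * a)).
  { rewrite E. assert (0 <= t * a / 2) by nra. nra. }
  replace (- t * a) with (- (t * a)) by ring. rewrite exp_Ropp.
  assert (Hq : 0 < exp (t * a)) by apply exp_pos.
  set (E0 := exp (t * a)) in *.
  assert (Hat : 0 < a ^ 2 * t) by (apply Rmult_lt_0_compat; [apply pow_lt|]; lra).
  apply Rmult_le_reg_r with (E0 * (a ^ 2 * t)). nra.
  replace (t * / E0 * (E0 * (a ^ 2 * t))) with (t * (a ^ 2 * t)) by (field; lra).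
  replace (4 / (a ^ 2 * t) * (E0 * (a ^ 2 * t))) with (4 * E0) by (field; lra).
  nra.
Qed.

Lemma lim_decay (f : R -> R) C : (forall t, 0 < t -> Rabs (f t) <= C / t) ->
  filterlim f (Rbar_locally p_infty) (locally 0).
Proof.
  intros H P [eps HP].
  exists (Rabs C / eps + 1). intros x Hx.
  assert (Hepos : 0 < eps) by (destruct eps; auto).
  assert (Hx0 : 0 < x).
  { assert (0 <= Rabs C / eps) by (apply Rdiv_le_0_compat; [apply Rabs_pos | auto]). lra. }
  apply HP. unfold ball; simpl; unfold AbsRing_ball, abs, minus, plus, opp; simpl.
  rewrite Ropp_0, Rplus_0_r. eapply Rle_lt_trans. apply H; auto.
  assert (HC : C <= Rabs C) by apply Rle_abs.
  assert (Rabs C < eps * x).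
  { assert (Rabs C / eps < x) by lra.
    apply (Rmult_lt_compat_l eps) in H0; auto. 
    replace (eps * (Rabs C / eps)) with (Rabs C) in H0 by (field; lra). lra. }
  apply Rmult_lt_reg_r with x; auto. unfold Rdiv. rewrite Rmult_assoc, Rinv_l; lra.
Qed.

Lemma L1_imp (g : C) : 0 < fst g ->
  is_RInt_gen (fun t => Cmod (impulse1 g t)) (at_point 0) (Rbar_locally p_infty) (Cmod g / fst g).
Proof.
  intros Hx. set (x := fst g) in *. set (c := Cmod g).
  assert (Hc : 0 <= c) by apply Cmod_ge_0.
  set (F := fun t => - (c / x) * exp (- t * x)).
  assert (HF : forall t, is_derive F t (c * exp (- t * x))).
  { intros t. unfold F. auto_derive; auto. field. lra. }
  assert (H := is_RInt_gen_Derive (Fa := at_point 0) (Fb := Rbar_locally p_infty) F (F 0) 0).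
  assert (E1 : 0 - F 0 = c / x).
  { unfold F. replace (- 0 * x) with 0 by ring. rewrite exp_0. field. lra. }
  rewrite E1 in H.
  apply is_RInt_gen_ext with (f := Derive F).
  { apply filter_forall. intros ab t _. rewrite (is_derive_unique _ _ _ (HF t)).
    rewrite Cmod_imp. reflexivity. }
  apply H.
  - apply filter_forall. intros ab t _. eexists; apply HF.
  - apply filter_forall. intros ab t _.
    apply continuous_ext with (f := fun t => c * exp (- t * x)).
    { intros u. symmetry. apply is_derive_unique. apply HF. }
    apply (ex_derive_continuous (K:=R_AbsRing) (V:=R_NormedModule)). auto_derive. auto.
  - intros P HP. exact (locally_singleton (F 0) P HP).
  - apply lim_decay with (C := c / x / x). intros t Ht. unfold F.
    rewrite Rabs_mult, Rabs_Ropp, Rabs_pos_eq, Rabs_pos_eq.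
    + pose proof (exp_decay1 x t Hx Ht).
      apply Rle_trans with (c / x * / (x * t)).
      apply Rmult_le_compat_l; auto. apply Rdiv_le_0_compat; lra.
      right. field. lra.
    + left; apply exp_pos.
    + apply Rdiv_le_0_compat; lra.
Qed.

Lemma exp_mono x y : x <= y -> exp x <= exp y.
Proof. intros [H|H]. left; apply exp_increasing; auto. subst; lra. Qed.

Lemma h_bound ga gb s : 0 < fst ga -> 0 < fst gb -> 0 <= s ->
  Cmod (conv (impulse1 ga) (impulse1 gb) s) <=
  Cmod ga * Cmod gb * (s * exp (- s * Rmin (fst ga) (fst gb))).
Proof.
  intros Ha Hb Hs. unfold conv.
  set (a := Rmin (fst ga) (fst gb)).
  assert (Ha1 : a <= fst ga) by apply Rmin_l.
  assert (Hb1 : a <= fst gb) by apply Rmin_r.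
  assert (Hc : forall x, continuous (fun u => Cmult (impulse1 ga (s - u)) (impulse1 gb u)) x).
  { intros x. apply cont_Cmult. apply cont_shift. apply imp_cont. apply imp_cont. }
  apply Rle_trans with (scal (s - 0) (Cmod ga * Cmod gb * exp (- s * a))).
  2:{ unfold scal; simpl; unfold mult; simpl. right; ring. }
  apply (Cmod_RInt_le (fun u => Cmult (impulse1 ga (s - u)) (impulse1 gb u))
           (fun _ => Cmod ga * Cmod gb * exp (- s * a)) 0 s _
           (scal (s - 0) (Cmod ga * Cmod gb * exp (- s * a))) Hs).
  - intros u Hu. rewrite Cmod_mult, !Cmod_imp.
    assert (exp (- (s - u) * fst ga) * exp (- u * fst gb) <= exp (- s * a)).
    { rewrite <- exp_plus. apply exp_mono. nra. }
    pose proof (Cmod_ge_0 ga). pose proof (Cmod_ge_0 gb).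
    pose proof (exp_pos (- (s - u) * fst ga)). pose proof (exp_pos (- u * fst gb)).
    assert (0 <= Cmod ga * Cmod gb) by nra.
    replace (Cmod ga * exp (- (s - u) * fst ga) * (Cmod gb * exp (- u * fst gb)))
      with ((Cmod ga * Cmod gb) * (exp (- (s - u) * fst ga) * exp (- u * fst gb))) by ring.
    apply Rmult_le_compat_l; auto.
  - apply RIntC_correct. auto.
  - exact (is_RInt_const (V:=R_NormedModule) 0 s (Cmod ga * Cmod gb * exp (- s * a))).
Qed.

Lemma h_cont ga gb x : continuous (conv (impulse1 ga) (impulse1 gb)) x.
Proof. eapply derC_cont. apply conv_deriv. Qed.

Lemma L1_h_exists ga gb : 0 < fst ga -> 0 < fst gb ->
  exists L, is_RInt_gen (fun t => Cmod (conv (impulse1 ga) (impulse1 gb) t)) (at_point 0) (Rbar_locally p_infty) L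
    /\ L <= Cmod ga * Cmod gb / (Rmin (fst ga) (fst gb)) ^ 2.
Proof.
  intros Ha Hb. set (a := Rmin (fst ga) (fst gb)).
  assert (Hapos : 0 < a) by (apply Rmin_pos; auto).
  set (K := Cmod ga * Cmod gb).
  assert (HK : 0 <= K) by (apply Rmult_le_pos; apply Cmod_ge_0).
  apply improper_exists.
  - intros x. apply cont_Cmod. apply h_cont.
  - intros x _. apply Cmod_ge_0.
  - intros T HT.
    set (F := fun s => - K * (s / a + / a ^ 2) * exp (- s * a)).
    assert (HF : forall s, is_derive F s (K * (s * exp (- s * a)))).
    { intros s. unfold F. auto_derive; auto. field. lra. }
    assert (HI : is_RInt (fun s => K * (s * exp (- s * a))) 0 T (minus (F T) (F 0))).
    { apply (is_RInt_derive (V:=R_CompleteNormedModule) F). intros; apply HF.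
      intros y _. apply (ex_derive_continuous (K:=R_AbsRing) (V:=R_NormedModule)). auto_derive. auto. }
    apply Rle_trans with (minus (F T) (F 0)).
    + apply is_RInt_le with (f := fun t => Cmod (conv (impulse1 ga) (impulse1 gb) t))
        (g := fun s => K * (s * exp (- s * a))) (a := 0) (b := T); auto.
      * apply (RInt_correct (V:=R_CompleteNormedModule)). apply exRR. intros x. apply cont_Cmod, h_cont.
      * intros x Hx. apply h_bound; auto. lra.
    + unfold minus, plus, opp; simpl. unfold F.
      replace (- 0 * a) with 0 by ring. rewrite exp_0.
      assert (0 <= K * (T / a + / a ^ 2) * exp (- T * a)).
      { apply Rmult_le_pos. apply Rmult_le_pos; auto.
        assert (0 < / a ^ 2) by (apply Rinv_0_lt_compat, pow_lt; auto).
        assert (0 <= T / a) by (apply Rdiv_le_0_compat; lra). lra.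
        left; apply exp_pos. }
      assert (E : K / a ^ 2 = - (- K * (0 / a + / a ^ 2) * 1)) by (field; lra).
      replace (K / (a * (a * 1))) with (K / a ^ 2) by (simpl; ring). rewrite E. lra.
Qed.

Lemma clip_cont (f : R -> C) x : (forall t, 0 <= t -> cont_Rplus f t) ->
  continuous (fun t => f (Rmax t 0)) x.
Proof.
  intros H P HP.
  assert (Hy0 : 0 <= Rmax x 0) by apply Rmax_r.
  specialize (H (Rmax x 0) Hy0 P HP).
  destruct H as [eps He]. exists eps. intros t Ht. apply He.
  - unfold ball in *; simpl in *; unfold AbsRing_ball, abs, minus, plus, opp in *; simpl in *.
    apply Rle_lt_trans with (Rabs (t + - x)); auto.
    clear Ht. unfold Rmax; destruct (Rle_dec t 0), (Rle_dec x 0); unfold Rabs;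
      repeat destruct Rcase_abs; lra.
  - apply Rmax_r.
Qed.

Lemma clip_deriv (f f' : R -> C) s : 0 < s -> is_derive f s (f' s) ->
  is_derive (fun t => f (Rmax t 0)) s (f' (Rmax s 0)).
Proof.
  intros Hs H. rewrite Rmax_left by lra.
  apply is_derive_ext_loc with (f := f); auto.
  exists (mkposreal _ Hs). intros t Ht.
  unfold ball in *; simpl in *; unfold AbsRing_ball, abs, minus, plus, opp in *; simpl in *.
  apply Rabs_lt_between in Ht. rewrite Rmax_left by lra. reflexivity.
Qed.

Lemma deriv_Cminus (f g : R -> C) x (a b : C) : is_derive f x a -> is_derive g x b ->
  is_derive (fun t => Cminus (f t) (g t)) x (Cminus a b).
Proof.
  intros Hf Hg. apply deriv_C.
  - exact (is_derive_minus (K:=R_AbsRing) (V:=R_NormedModule) _ _ x _ _ (deriv_fst _ _ _ Hf) (deriv_fst _ _ _ Hg)).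
  - exact (is_derive_minus (K:=R_AbsRing) (V:=R_NormedModule) _ _ x _ _ (deriv_snd _ _ _ Hf) (deriv_snd _ _ _ Hg)).
Qed.

Lemma deriv_Cscal (c : C) (f : R -> C) x (a : C) : is_derive f x a ->
  is_derive (fun t => Cmult c (f t)) x (Cmult c a).
Proof.
  intros Hf. eapply is_derive_eq. apply deriv_Cmult. apply is_derive_const. exact Hf.
  destruct c, a, (f x). apply injective_projections; simpl; unfold zero; simpl; ring.
Qed.

Lemma cont_Cminus (f g : R -> C) x : continuous f x -> continuous g x ->
  continuous (fun t => Cminus (f t) (g t)) x.
Proof.
  intros Hf Hg. apply cont_C.
  - exact (continuous_minus (K:=R_AbsRing) (V:=R_NormedModule) _ _ x (cont_fstC _ _ Hf) (cont_fstC _ _ Hg)).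
  - exact (continuous_minus (K:=R_AbsRing) (V:=R_NormedModule) _ _ x (cont_sndC _ _ Hf) (cont_sndC _ _ Hg)).
Qed.

Lemma cont_Cscal (c : C) (f : R -> C) x : continuous f x -> continuous (fun t => Cmult c (f t)) x.
Proof. intros H. apply cont_Cmult; auto. apply continuous_const. Qed.

Definition hh ga gb := conv (impulse1 ga) (impulse1 gb).
Definition hd ga gb s := Cmult ga (Cminus (impulse1 gb s) (hh ga gb s)).
Definition hdd ga gb s := Cmult ga (Cminus (Cmult (Copp gb) (impulse1 gb s))
   (Cmult gb (Cminus (impulse1 ga s) (hh ga gb s)))).

Lemma hh_deriv ga gb s : is_derive (hh ga gb) s (hd ga gb s).
Proof. apply conv_deriv. Qed.

Lemma hh_deriv2 ga gb s : is_derive (hh ga gb) s (Cmult gb (Cminus (impulse1 ga s) (hh ga gb s))).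
Proof.
  assert (E : forall t, hh ga gb t = conv (impulse1 gb) (impulse1 ga) t).
  { intros t. apply conv_comm; apply imp_cont. }
  rewrite E. eapply is_derive_ext. { intros t. symmetry. apply E. }
  apply conv_deriv.
Qed.

Lemma hd_deriv ga gb s : is_derive (hd ga gb) s (hdd ga gb s).
Proof.
  unfold hd, hdd. apply deriv_Cscal. apply deriv_Cminus. apply imp_deriv. apply hh_deriv2.
Qed.

Lemma hh_cont ga gb s : continuous (hh ga gb) s.
Proof. eapply derC_cont. apply hh_deriv. Qed.

Lemma hd_cont ga gb s : continuous (hd ga gb) s.
Proof. eapply derC_cont. apply hd_deriv. Qed.

Lemma hdd_cont ga gb s : continuous (hdd ga gb) s.
Proof.
  unfold hdd. apply cont_Cscal. apply cont_Cminus. apply cont_Cscal. apply imp_cont.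
  apply cont_Cscal. apply cont_Cminus. apply imp_cont. apply hh_cont.
Qed.

Lemma hh_0 ga gb : hh ga gb 0 = (0, 0).
Proof. unfold hh, conv. rewrite RInt_point. reflexivity. Qed.

Lemma imp_0 g : impulse1 g 0 = g.
Proof.
  unfold impulse1. replace (Cmult (RtoC (- 0)) g) with ((0, 0) : C).
  rewrite Cexp_0. destruct g; apply injective_projections; simpl; ring.
  destruct g; apply injective_projections; simpl; ring.
Qed.

Lemma hd_0 ga gb : hd ga gb 0 = Cmult ga gb.
Proof.
  unfold hd. rewrite hh_0, imp_0. destruct ga, gb. apply injective_projections; simpl; ring.
Qed.

Lemma Cmod_hd ga gb s : Cmod (hd ga gb s) <= Cmod ga * (Cmod (impulse1 gb s) + Cmod (hh ga gb s)).
Proof.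
  unfold hd. rewrite Cmod_mult. apply Rmult_le_compat_l. apply Cmod_ge_0.
  unfold Cminus. eapply Rle_trans. apply Cmod_triangle. rewrite Cmod_opp. lra.
Qed.

Lemma Cmod_hdd ga gb s : Cmod (hdd ga gb s) <=
  Cmod (Cmult ga gb) * (Cmod (impulse1 ga s) + Cmod (impulse1 gb s) + Cmod (hh ga gb s)).
Proof.
  assert (E : hdd ga gb s = Cmult (Copp (Cmult ga gb))
     (Cplus (Cplus (impulse1 ga s) (impulse1 gb s)) (Copp (hh ga gb s)))).
  { unfold hdd. destruct ga, gb, (impulse1 (r, r0) s), (impulse1 (r1, r2) s), (hh (r, r0) (r1, r2) s).
    apply injective_projections; simpl; ring. }
  rewrite E, Cmod_mult, Cmod_opp. apply Rmult_le_compat_l. apply Cmod_ge_0.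
  eapply Rle_trans. apply Cmod_triangle. rewrite Cmod_opp.
  pose proof (Cmod_triangle (impulse1 ga s) (impulse1 gb s)). lra.
Qed.

Lemma conv_bound (K G : R -> C) S t : 0 <= t -> (forall s, continuous K s) -> (forall s, continuous G s) ->
  (forall u, 0 <= u -> Cmod (G u) <= S) ->
  Cmod (@RInt C_R_CompleteNormedModule (fun u => Cmult (K (t - u)) (G u)) 0 t) <= S * RInt (fun s => Cmod (K s)) 0 t.
Proof.
  intros Ht HK HG HS.
  apply (Cmod_RInt_le (fun u => Cmult (K (t - u)) (G u)) (fun u => S * Cmod (K (t - u))) 0 t); auto.
  - intros u Hu. rewrite Cmod_mult, Rmult_comm. apply Rmult_le_compat_r. apply Cmod_ge_0. apply HS; lra.
  - apply RIntC_correct. intros x. apply cont_Cmult; auto. apply cont_shift; auto.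
  - assert (H1 : is_RInt (fun s => Cmod (K s)) 0 t (RInt (fun s => Cmod (K s)) 0 t)).
    { apply (RInt_correct (V:=R_CompleteNormedModule)). apply exRR. intros x; apply cont_Cmod; auto. }
    apply (RInt_reflect (V:=R_NormedModule)) in H1.
    apply (is_RInt_scal (V:=R_NormedModule) _ _ _ S) in H1. exact H1.
Qed.

Lemma RInt_Cmod_hd ga gb t : 0 <= t ->
  RInt (fun s => Cmod (hd ga gb s)) 0 t <=
  Cmod ga * (RInt (fun s => Cmod (impulse1 gb s)) 0 t + RInt (fun s => Cmod (hh ga gb s)) 0 t).
Proof.
  intros Ht.
  assert (H1 : is_RInt (fun s => Cmod (impulse1 gb s)) 0 t (RInt (fun s => Cmod (impulse1 gb s)) 0 t)).
  { apply (RInt_correct (V:=R_CompleteNormedModule)). apply exRR. intros x; apply cont_Cmod, imp_cont. }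
  assert (H2 : is_RInt (fun s => Cmod (hh ga gb s)) 0 t (RInt (fun s => Cmod (hh ga gb s)) 0 t)).
  { apply (RInt_correct (V:=R_CompleteNormedModule)). apply exRR. intros x; apply cont_Cmod, hh_cont. }
  pose proof (is_RInt_plus (V:=R_NormedModule) _ _ _ _ _ _ H1 H2) as H3.
  apply (is_RInt_scal (V:=R_NormedModule) _ _ _ (Cmod ga)) in H3.
  apply is_RInt_le with (f := fun s => Cmod (hd ga gb s))
    (g := fun s => scal (Cmod ga) (plus (Cmod (impulse1 gb s)) (Cmod (hh ga gb s)))) (a := 0) (b := t); auto.
  - apply (RInt_correct (V:=R_CompleteNormedModule)). apply exRR. intros x; apply cont_Cmod, hd_cont.
  - intros x _. apply Cmod_hd.
Qed.

Lemma RInt_Cmod_hdd ga gb t : 0 <= t ->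
  RInt (fun s => Cmod (hdd ga gb s)) 0 t <=
  Cmod (Cmult ga gb) * (RInt (fun s => Cmod (impulse1 ga s)) 0 t + RInt (fun s => Cmod (impulse1 gb s)) 0 t
     + RInt (fun s => Cmod (hh ga gb s)) 0 t).
Proof.
  intros Ht.
  assert (H0 : is_RInt (fun s => Cmod (impulse1 ga s)) 0 t (RInt (fun s => Cmod (impulse1 ga s)) 0 t)).
  { apply (RInt_correct (V:=R_CompleteNormedModule)). apply exRR. intros x; apply cont_Cmod, imp_cont. }
  assert (H1 : is_RInt (fun s => Cmod (impulse1 gb s)) 0 t (RInt (fun s => Cmod (impulse1 gb s)) 0 t)).
  { apply (RInt_correct (V:=R_CompleteNormedModule)). apply exRR. intros x; apply cont_Cmod, imp_cont. }
  assert (H2 : is_RInt (fun s => Cmod (hh ga gb s)) 0 t (RInt (fun s => Cmod (hh ga gb s)) 0 t)).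
  { apply (RInt_correct (V:=R_CompleteNormedModule)). apply exRR. intros x; apply cont_Cmod, hh_cont. }
  pose proof (is_RInt_plus (V:=R_NormedModule) _ _ _ _ _ _ H0 H1) as H3.
  pose proof (is_RInt_plus (V:=R_NormedModule) _ _ _ _ _ _ H3 H2) as H4.
  apply (is_RInt_scal (V:=R_NormedModule) _ _ _ (Cmod (Cmult ga gb))) in H4.
  apply is_RInt_le with (f := fun s => Cmod (hdd ga gb s))
    (g := fun s => scal (Cmod (Cmult ga gb)) (plus (plus (Cmod (impulse1 ga s)) (Cmod (impulse1 gb s))) (Cmod (hh ga gb s))))
    (a := 0) (b := t); auto.
  - apply (RInt_correct (V:=R_CompleteNormedModule)). apply exRR. intros x; apply cont_Cmod, hdd_cont.
  - intros x _. apply Cmod_hdd.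
Qed.

Lemma L1_imp_val g : 0 < fst g -> L1norm (impulse1 g) = Cmod g / fst g.
Proof.
  intros H. unfold L1norm. apply (is_RInt_gen_unique (V:=R_CompleteNormedModule)). apply L1_imp; auto.
Qed.

Lemma L1_imp_partial g t : 0 < fst g -> 0 <= t -> RInt (fun s => Cmod (impulse1 g s)) 0 t <= L1norm (impulse1 g).
Proof.
  intros H Ht. rewrite L1_imp_val; auto. apply improper_ge; auto.
  - intros x; apply cont_Cmod, imp_cont.
  - intros; apply Cmod_ge_0.
  - apply L1_imp; auto.
Qed.

Lemma L1_hh ga gb : 0 < fst ga -> 0 < fst gb ->
  (forall t, 0 <= t -> RInt (fun s => Cmod (hh ga gb s)) 0 t <= L1norm (hh ga gb)) /\
  L1norm (hh ga gb) <= Cmod ga * Cmod gb / (Rmin (fst ga) (fst gb)) ^ 2.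
Proof.
  intros Ha Hb. destruct (L1_h_exists ga gb Ha Hb) as [L [HL HLB]].
  assert (E : L1norm (hh ga gb) = L).
  { unfold L1norm. apply (is_RInt_gen_unique (V:=R_CompleteNormedModule)). exact HL. }
  rewrite E. split; auto. intros t Ht. apply improper_ge; auto.
  - intros x; apply cont_Cmod, hh_cont.
  - intros; apply Cmod_ge_0.
Qed.

Lemma decay_hh ga gb : 0 < fst ga -> 0 < fst gb ->
  exists C, 0 <= C /\ forall t, 0 < t -> Cmod (hh ga gb t) <= C / t.
Proof.
  intros Ha Hb. set (a := Rmin (fst ga) (fst gb)).
  assert (Hapos : 0 < a) by (apply Rmin_pos; auto).
  set (K := Cmod ga * Cmod gb).
  assert (HK : 0 <= K) by (apply Rmult_le_pos; apply Cmod_ge_0).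
  exists (K * (4 / a ^ 2)). split.
  { apply Rmult_le_pos; auto. apply Rdiv_le_0_compat. lra. apply pow_lt; auto. }
  intros t Ht. eapply Rle_trans. apply h_bound; auto. lra.
  fold a K. pose proof (exp_decay2 a t Hapos Ht).
  apply Rle_trans with (K * (4 / (a ^ 2 * t))). apply Rmult_le_compat_l; auto.
  right. field. split; lra.
Qed.

Lemma decay_imp g : 0 < fst g -> exists C, 0 <= C /\ forall t, 0 < t -> Cmod (impulse1 g t) <= C / t.
Proof.
  intros Hx. exists (Cmod g / fst g). split. apply Rdiv_le_0_compat. apply Cmod_ge_0. auto.
  intros t Ht. rewrite Cmod_imp. pose proof (exp_decay1 (fst g) t Hx Ht).
  apply Rle_trans with (Cmod g * / (fst g * t)). apply Rmult_le_compat_l; auto. apply Cmod_ge_0.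
  right. field. split; lra.
Qed.

Lemma Cmod3 (A B I : C) : Cmod (Cplus (Cminus A B) I) <= Cmod A + Cmod B + Cmod I.
Proof.
  eapply Rle_trans. apply Cmod_triangle. unfold Cminus.
  pose proof (Cmod_triangle A (Copp B)). rewrite Cmod_opp in H. lra.
Qed.

Lemma Rmax00 : Rmax 0 0 = 0.
Proof. unfold Rmax; destruct Rle_dec; auto. Qed.

Lemma filt_clip (K f : R -> C) t : 0 <= t ->
  filt K f t = @RInt C_R_CompleteNormedModule (fun u => Cmult (K (t - u)) (f (Rmax u 0))) 0 t.
Proof.
  intros Ht. unfold filt. apply (RInt_ext (V:=C_R_CompleteNormedModule)). intros x Hx.
  rewrite Rmin_left in Hx by lra. rewrite Rmax_left by lra. reflexivity.
Qed.

Lemma part1 ga gb : 0 < fst ga -> 0 < fst gb -> forall g g1 g2 : R -> C,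
     (forall t, 0 < t -> is_derive g t (g1 t)) ->
     (forall t, 0 < t -> is_derive g1 t (g2 t)) ->
     (forall t, 0 <= t -> cont_Rplus g t) ->
     (forall t, 0 <= t -> cont_Rplus g1 t) ->
     (forall t, 0 <= t -> cont_Rplus g2 t) ->
     (exists M, forall t, 0 <= t -> Cmod (g t) <= M) ->
     (exists eps : R -> R, is_lim eps p_infty 0 /\
        forall t, 0 <= t ->
          Cmod (filt (hh ga gb) g1 t) <=
            Cmod ga * (L1norm (impulse1 gb) + L1norm (hh ga gb)) * supnorm g + eps t).
Proof.
  intros Ha Hb g g1 g2 Hd1 Hd2 Hc0 Hc1 Hc2 [M HM].
  set (S := supnorm g).
  assert (HS : forall u, 0 <= u -> Cmod (g u) <= S) by (apply (supnorm_bound g M HM)).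
  assert (HS0 : 0 <= S) by (apply (supnorm_ge0 g M HM)).
  set (G0 := fun t => g (Rmax t 0)). set (G1 := fun t => g1 (Rmax t 0)).
  assert (HG0c : forall s, continuous G0 s) by (intros; apply clip_cont; auto).
  assert (HG1c : forall s, continuous G1 s) by (intros; apply clip_cont; auto).
  assert (HGd : forall s, 0 < s -> is_derive G0 s (G1 s)).
  { intros s Hs. apply (clip_deriv g g1 s Hs (Hd1 s Hs)). }
  assert (HG0S : forall u, 0 <= u -> Cmod (G0 u) <= S).
  { intros u _. apply HS. apply Rmax_r. }
  destruct (decay_hh ga gb Ha Hb) as [Ch [HCh HChb]].
  destruct (L1_hh ga gb Ha Hb) as [Lh _].
  exists (fun t => Cmod (hh ga gb t) * Cmod (g 0)). split.
  - apply lim_decay with (C := Ch * Cmod (g 0)). intros t Ht.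
    rewrite Rabs_pos_eq by (apply Rmult_le_pos; apply Cmod_ge_0).
    pose proof (Cmod_ge_0 (g 0)).
    apply Rle_trans with (Ch / t * Cmod (g 0)). apply Rmult_le_compat_r; auto.
    right; field; lra.
  - intros t Ht. rewrite filt_clip by auto.
    erewrite RIntC_unique; [| exact (ibp (hh ga gb) (hd ga gb) G0 G1 t Ht (hh_deriv ga gb) (hd_cont ga gb)
       HG0c HG1c HGd)].
    eapply Rle_trans. apply Cmod3.
    rewrite hh_0, !Cmod_mult.
    replace (Cmod (0, 0)) with 0 by (symmetry; apply Cmod_0).
    assert (HI := conv_bound (hd ga gb) G0 S t Ht (hd_cont ga gb) HG0c HG0S).
    assert (HI2 := RInt_Cmod_hd ga gb t Ht).
    assert (HI3 := L1_imp_partial gb t Hb Ht). assert (HI4 := Lh t Ht).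
    assert (E0 : G0 0 = g 0) by (unfold G0; rewrite Rmax00; auto). rewrite E0.
    pose proof (Cmod_ge_0 ga).
    assert (HI5 : Cmod ga * (RInt (fun s => Cmod (impulse1 gb s)) 0 t + RInt (fun s => Cmod (hh ga gb s)) 0 t)
       <= Cmod ga * (L1norm (impulse1 gb) + L1norm (hh ga gb))).
    { apply Rmult_le_compat_l; auto. lra. }
    assert (HI6 : S * RInt (fun s => Cmod (hd ga gb s)) 0 t <= S * (Cmod ga * (L1norm (impulse1 gb) + L1norm (hh ga gb)))).
    { apply Rmult_le_compat_l; auto. lra. }
    lra.
Qed.

Lemma part2 ga gb : 0 < fst ga -> 0 < fst gb -> forall g g1 g2 : R -> C,
     (forall t, 0 < t -> is_derive g t (g1 t)) ->
     (forall t, 0 < t -> is_derive g1 t (g2 t)) ->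
     (forall t, 0 <= t -> cont_Rplus g t) ->
     (forall t, 0 <= t -> cont_Rplus g1 t) ->
     (forall t, 0 <= t -> cont_Rplus g2 t) ->
     (exists M, forall t, 0 <= t -> Cmod (g t) <= M) ->
     (exists eps : R -> R, is_lim eps p_infty 0 /\
        forall t, 0 <= t ->
          Cmod (filt (hh ga gb) g2 t) <=
            Cmod (Cmult ga gb) * (1 + L1norm (impulse1 ga) + L1norm (impulse1 gb) + L1norm (hh ga gb))
              * supnorm g + eps t).
Proof.
  intros Ha Hb g g1 g2 Hd1 Hd2 Hc0 Hc1 Hc2 [M HM].
  set (S := supnorm g).
  assert (HS : forall u, 0 <= u -> Cmod (g u) <= S) by (apply (supnorm_bound g M HM)).
  assert (HS0 : 0 <= S) by (apply (supnorm_ge0 g M HM)).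
  set (G0 := fun t => g (Rmax t 0)). set (G1 := fun t => g1 (Rmax t 0)).
  set (G2 := fun t => g2 (Rmax t 0)).
  assert (HG0c : forall s, continuous G0 s) by (intros; apply clip_cont; auto).
  assert (HG1c : forall s, continuous G1 s) by (intros; apply clip_cont; auto).
  assert (HG2c : forall s, continuous G2 s) by (intros; apply clip_cont; auto).
  assert (HGd : forall s, 0 < s -> is_derive G0 s (G1 s)).
  { intros s Hs. apply (clip_deriv g g1 s Hs (Hd1 s Hs)). }
  assert (HGd1 : forall s, 0 < s -> is_derive G1 s (G2 s)).
  { intros s Hs. apply (clip_deriv g1 g2 s Hs (Hd2 s Hs)). }
  assert (HG0S : forall u, 0 <= u -> Cmod (G0 u) <= S).
  { intros u _. apply HS. apply Rmax_r. }
  destruct (decay_hh ga gb Ha Hb) as [Ch [HCh HChb]].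
  destruct (decay_imp gb Hb) as [C2 [HC2 HC2b]].
  destruct (L1_hh ga gb Ha Hb) as [Lh _].
  exists (fun t => Cmod (hh ga gb t) * Cmod (g1 0) + Cmod (hd ga gb t) * Cmod (g 0)). split.
  - apply lim_decay with (C := Ch * Cmod (g1 0) + Cmod ga * (C2 + Ch) * Cmod (g 0)). intros t Ht.
    pose proof (Cmod_ge_0 (g 0)). pose proof (Cmod_ge_0 (g1 0)).
    pose proof (Cmod_ge_0 (hh ga gb t)). pose proof (Cmod_ge_0 (hd ga gb t)). pose proof (Cmod_ge_0 ga).
    rewrite Rabs_pos_eq by nra.
    assert (K1 : Cmod (hh ga gb t) * Cmod (g1 0) <= Ch / t * Cmod (g1 0)).
    { apply Rmult_le_compat_r; auto. }
    assert (K2 : Cmod (hd ga gb t) <= Cmod ga * (C2 / t + Ch / t)).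
    { eapply Rle_trans. apply Cmod_hd. apply Rmult_le_compat_l; auto.
      pose proof (HC2b t Ht). pose proof (HChb t Ht). lra. }
    assert (K3 : Cmod (hd ga gb t) * Cmod (g 0) <= Cmod ga * (C2 / t + Ch / t) * Cmod (g 0)).
    { apply Rmult_le_compat_r; auto. }
    apply Rle_trans with (Ch / t * Cmod (g1 0) + Cmod ga * (C2 / t + Ch / t) * Cmod (g 0)). lra.
    right; field; lra.
  - intros t Ht. rewrite filt_clip by auto.
    erewrite RIntC_unique; [| exact (ibp (hh ga gb) (hd ga gb) G1 G2 t Ht (hh_deriv ga gb) (hd_cont ga gb)
       HG1c HG2c HGd1)].
    erewrite (RIntC_unique (fun u => Cmult (hd ga gb (t - u)) (G1 u)));
      [| exact (ibp (hd ga gb) (hdd ga gb) G0 G1 t Ht (hd_deriv ga gb) (hdd_cont ga gb)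
       HG0c HG1c HGd)].
    eapply Rle_trans. apply Cmod3.
    match goal with |- context [Cmod (Cplus (Cminus ?A ?B) ?I)] => pose proof (Cmod3 A B I) as HB end.
    rewrite hh_0, hd_0 in *. rewrite !Cmod_mult in *.
    replace (Cmod (0, 0)) with 0 by (symmetry; apply Cmod_0).
    assert (HI := conv_bound (hdd ga gb) G0 S t Ht (hdd_cont ga gb) HG0c HG0S).
    assert (HI2 := RInt_Cmod_hdd ga gb t Ht). rewrite Cmod_mult in HI2.
    assert (HI3 := L1_imp_partial gb t Hb Ht). assert (HI4 := Lh t Ht).
    assert (HI3' := L1_imp_partial ga t Ha Ht).
    assert (E0 : G0 0 = g 0) by (unfold G0; rewrite Rmax00; auto). rewrite E0 in *.
    assert (E1 : G1 0 = g1 0) by (unfold G1; rewrite Rmax00; auto). rewrite E1 in *.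
    pose proof (Cmod_ge_0 (Cmult ga gb)) as Hgg. rewrite Cmod_mult in Hgg.
    assert (HG0t : Cmod ga * Cmod gb * Cmod (G0 t) <= Cmod ga * Cmod gb * S).
    { apply Rmult_le_compat_l; auto. }
    assert (HI5 : Cmod ga * Cmod gb * (RInt (fun s => Cmod (impulse1 ga s)) 0 t + RInt (fun s => Cmod (impulse1 gb s)) 0 t
       + RInt (fun s => Cmod (hh ga gb s)) 0 t)
       <= Cmod ga * Cmod gb * (L1norm (impulse1 ga) + L1norm (impulse1 gb) + L1norm (hh ga gb))).
    { apply Rmult_le_compat_l; auto. lra. }
    assert (HI6 : S * RInt (fun s => Cmod (hdd ga gb s)) 0 t <=
       S * (Cmod ga * Cmod gb * (L1norm (impulse1 ga) + L1norm (impulse1 gb) + L1norm (hh ga gb)))).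
    { apply Rmult_le_compat_l; auto. lra. }
    pose proof (Cmod_ge_0 (G1 t)).
    lra.
Qed.

Lemma special ga gb (gam zeta : R) : 0 < fst ga -> 0 < fst gb -> 0 < gam -> 0 < zeta <= 1 ->
  Cplus ga gb = RtoC (2 * zeta * gam) -> Cmult ga gb = RtoC (gam ^ 2) ->
  L1norm (impulse1 gb) = L1norm (impulse1 ga) /\ L1norm (impulse1 ga) <= 1 / zeta /\
  L1norm (hh ga gb) <= 1 / zeta ^ 2.
Proof.
  intros Ha Hb Hg Hz Hs Hp.
  destruct ga as [x1 y1], gb as [x2 y2]. simpl in Ha, Hb.
  assert (S1 := f_equal fst Hs). assert (S2 := f_equal snd Hs).
  assert (P1 := f_equal fst Hp). assert (P2 := f_equal snd Hp).
  simpl in S1, S2, P1, P2.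
  assert (Ey : y2 = - y1) by lra. subst y2.
  assert (Ex : x1 = x2).
  { destruct (Req_dec y1 0) as [Hy|Hy].
    - subst y1. assert (Hz2 : zeta ^ 2 <= 1) by nra.
      assert (E : (x1 - x2) ^ 2 = 4 * gam ^ 2 * (zeta ^ 2 - 1)).
      { replace ((x1 - x2) ^ 2) with ((x1 + x2) ^ 2 - 4 * (x1 * x2)) by ring.
        rewrite S1. replace (x1 * x2) with (gam ^ 2) by (simpl; lra). ring. }
      assert (E2 : (x1 - x2) ^ 2 = 0).
      { pose proof (pow2_ge_0 (x1 - x2)). assert (0 <= gam ^ 2) by nra. nra. }
      assert (E3 : (x1 - x2) * (x1 - x2) = 0) by (simpl in E2; lra). apply Rmult_integral in E3. lra.
    - assert (y1 * (x2 - x1) = 0) by nra.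
      apply Rmult_integral in H. destruct H; [contradiction | lra]. }
  subst x2.
  assert (Hx : x1 = zeta * gam) by lra.
  assert (Hm1 : Cmod (x1, y1) = gam).
  { unfold Cmod; cbn [fst snd]. replace (x1 ^ 2 + y1 ^ 2) with (gam ^ 2) by nra.
    apply sqrt_pow2; lra. }
  assert (Hm2 : Cmod (x1, - y1) = gam).
  { unfold Cmod; cbn [fst snd]. replace (x1 ^ 2 + (- y1) ^ 2) with (gam ^ 2) by nra.
    apply sqrt_pow2; lra. }
  rewrite !L1_imp_val; simpl; auto. rewrite Hm1, Hm2.
  split; auto. split.
  - rewrite Hx. right. field. lra.
  - destruct (L1_hh (x1, y1) (x1, - y1)) as [_ HL]; simpl; auto.
    rewrite Hm1, Hm2 in HL. simpl in HL. rewrite Rmin_left in HL by lra.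
    eapply Rle_trans. apply HL. rewrite Hx. right. field. lra.
Qed.

Theorem propositionA8 (gam1 gam2 : C)
  (Hre1 : 0 < fst gam1) (Hre2 : 0 < fst gam2) :
  let h1 := impulse1 gam1 in
  let h2 := impulse1 gam2 in
  let h := conv h1 h2 in
  (forall g g1 g2 : R -> C,
     (forall t, 0 < t -> is_derive g t (g1 t)) ->
     (forall t, 0 < t -> is_derive g1 t (g2 t)) ->
     (forall t, 0 <= t -> cont_Rplus g t) ->
     (forall t, 0 <= t -> cont_Rplus g1 t) ->
     (forall t, 0 <= t -> cont_Rplus g2 t) ->
     (exists M, forall t, 0 <= t -> Cmod (g t) <= M) ->
     (exists eps : R -> R, is_lim eps p_infty 0 /\
        forall t, 0 <= t ->
          Cmod (filt h g1 t) <=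
            Cmod gam1 * (L1norm h2 + L1norm h) * supnorm g + eps t) /\
     (exists eps : R -> R, is_lim eps p_infty 0 /\
        forall t, 0 <= t ->
          Cmod (filt h g2 t) <=
            Cmod (Cmult gam1 gam2) * (1 + L1norm h1 + L1norm h2 + L1norm h)
              * supnorm g + eps t)) /\
  (forall gam zeta : R, 0 < gam -> 0 < zeta <= 1 ->
     Cplus gam1 gam2 = RtoC (2 * zeta * gam) ->
     Cmult gam1 gam2 = RtoC (gam ^ 2) ->
     L1norm h2 = L1norm h1 /\ L1norm h1 <= 1 / zeta /\
     L1norm h <= 1 / zeta ^ 2).
Proof.
  intros h1 h2 h. split.
  - intros g g1 g2 H1 H2 H3 H4 H5 H6. split.
    + exact (part1 gam1 gam2 Hre1 Hre2 g g1 g2 H1 H2 H3 H4 H5 H6).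
    + exact (part2 gam1 gam2 Hre1 Hre2 g g1 g2 H1 H2 H3 H4 H5 H6).
  - intros gam zeta Hg Hz Hs Hp.
    exact (special gam1 gam2 gam zeta Hre1 Hre2 Hg Hz Hs Hp).
Qed.
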